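(* Let $G$ be a stitched 2-ichromatic ordered graph with vertices $v_1<\dots<v_{m+n}$ whose parts are $\{v_1,\ldots,v_m\}$ and $\{v_{m+1},\ldots,v_{m+n}\}$. If $v_1v_{m+n}$ and $v_mv_{m+1}$ are edges of $G$, then $R(G)\ge 5r+1$, where $r=\min(m,n)-1$.
   Context: An ordered graph is a graph together with a specified linear ordering of its vertex set. An ordered graph $G$ is contained in an ordered graph $H$ if there is an order-preserving injection $V(G)\to V(H)$ mapping edges to edges. An interval coloring of an ordered graph is a partition of its vertex set into independent sets each consisting of consecutive vertices (called parts); an ordered graph is 2-ichromatic if its minimum number of parts in an interval coloring is 2. A 2-ichromatic ordered graph is stitched if the four vertices consisting of the first and last vertex of each of the two parts lie in a single connected component. $R(G)$ denotes the 2-color ordered Ramsey number: the minimum $N$ such that every 2-coloring of the edges of the ordered complete graph on $N$ vertices contains a monochromatic copy of $G$. *)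

(* Defs.v *)
From mathcomp Require Import all_boot.
Set Implicit Arguments. Unset Strict Implicit. Unset Printing Implicit Defensive.

(* An ordered graph on k vertices: vertex set 'I_k with its natural order,
   edge relation e (symmetric, irreflexive). Vertex v_i of the paper is i-1. *)
Definition ordgraph (k : nat) (e : rel 'I_k) : Prop :=
  symmetric e /\ irreflexive e.

Definition interval_coloring (k p : nat) (e : rel 'I_k) (col : 'I_k -> 'I_p) : Prop :=
  [/\ (forall x y : 'I_k, x <= y -> col x <= col y),
      (forall c : 'I_p, exists x, col x = c) &
      (forall x y : 'I_k, e x y -> col x != col y)].

Definition has_interval_coloring (k p : nat) (e : rel 'I_k) : Prop :=
  exists col : 'I_k -> 'I_p, interval_coloring e col.

Definition two_ichromatic (k : nat) (e : rel 'I_k) : Prop :=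
  has_interval_coloring 2 e /\
  (forall p, has_interval_coloring p e -> 2 <= p).

Definition parts_split (m n : nat) (e : rel 'I_(m + n)) : Prop :=
  [/\ 0 < m, 0 < n & forall x y : 'I_(m + n), e x y -> (x < m) != (y < m)].

(* Stitched (w.r.t. the parts above): first and last vertices of the two
   parts, i.e. vertices 0, m-1, m, m+n-1, lie in one connected component. *)
Definition stitched (m n : nat) (e : rel 'I_(m + n)) : Prop :=
  forall x y : 'I_(m + n),
    val x \in [:: 0; m.-1; m; (m + n).-1] ->
    val y \in [:: 0; m.-1; m; (m + n).-1] ->
    connect e x y.

(* A 2-coloring of the edges of the ordered complete graph on N vertices:
   the edge {i, j} with i < j receives color c i j. *)
Definition coloring (N : nat) := 'I_N -> 'I_N -> bool.

Definition mono_copy (k N : nat) (e : rel 'I_k) (c : coloring N) (b : bool) : Prop :=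
  exists f : 'I_k -> 'I_N,
    (forall x y : 'I_k, x < y -> f x < f y) /\
    (forall x y : 'I_k, x < y -> e x y -> c (f x) (f y) = b).

Definition ramsey_prop (k : nat) (e : rel 'I_k) (N : nat) : Prop :=
  forall c : coloring N, exists b, mono_copy e c b.

Definition ramsey_ge (k : nat) (e : rel 'I_k) (M : nat) : Prop :=
  forall N, ramsey_prop e N -> M <= N.

(* Main.v *)
Require Import Defs.
From mathcomp Require Import all_boot.
Definition bl (a d : nat) : bool :=
  (a == d) || ((a == 0) && (d == 4)) || ((a == 1) && (d == 2)) || ((a == 2) && (d == 3)).

Lemma red_fin a b c d : a < b -> b <= c -> c < d -> d < 5 -> bl a d = false -> bl b c = false -> False.
Proof.
case: a => [|[|[|[|[|a]]]]]; case: b => [|[|[|[|[|b]]]]]; case: c => [|[|[|[|[|c]]]]];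
 case: d => [|[|[|[|[|d]]]]]; by [].
Qed.
Lemma blue_fin a b c d : a < b -> b <= c -> c < d -> d < 5 -> bl a d -> (a \in [:: 0; 4]) && (b \notin [:: 0; 4]).
Proof.
case: a => [|[|[|[|[|a]]]]]; case: b => [|[|[|[|[|b]]]]]; case: c => [|[|[|[|[|c]]]]];
 case: d => [|[|[|[|[|d]]]]]; by [].
Qed.
Lemma bl_cl a d : a < 5 -> d < 5 -> bl a d -> ((a == 0) || (a == 4)) = ((d == 0) || (d == 4)).
Proof.
case: a => [|[|[|[|[|a]]]]]; case: d => [|[|[|[|[|d]]]]]; by [].
Qed.

Lemma div_step i j r : 0 < r -> i + r <= j -> i %/ r < j %/ r.
Proof.
move=> r0 h; have e : (i + 1 * r) %/ r = i %/ r + 1 by rewrite divnDMl.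
rewrite mul1n in e; rewrite -addn1 -e.
by apply: leq_div2r.
Qed.

Lemma mono_gap k N (f : 'I_k -> 'I_N) :
  (forall x y : 'I_k, x < y -> f x < f y) ->
  forall d (x y : 'I_k), val y = val x + d -> f x + d <= f y.
Proof.
move=> fm; elim=> [|d IH] x y hy.
  by rewrite addn0; have -> : x = y by apply: val_inj; rewrite hy addn0.
have zk : val x + d < k by rewrite (leq_trans _ (ltn_ord y)) // hy addnS.
have := IH x (Ordinal zk) erefl => h1.
have h2 : f (Ordinal zk) < f y by apply: fm; rewrite /= hy addnS.
by rewrite addnS; apply: leq_ltn_trans h2.
Qed.

Theorem corollary3p2 (m n : nat) (e : rel 'I_(m + n)) :
  ordgraph e ->
  two_ichromatic e ->
  parts_split e ->
  stitched e ->
  (forall x y : 'I_(m + n), val x = 0 -> val y = (m + n).-1 -> e x y) ->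
  (forall x y : 'I_(m + n), val x = m.-1 -> val y = m -> e x y) ->
  ramsey_ge e (5 * (minn m n).-1 + 1).
Proof.
move=> [esym eirr] _ [m0 n0 _] st e1 e2 N HN.
case: leqP => // HN'.
set r := (minn m n).-1 in HN'.
have hNr : N <= 5 * r by rewrite addn1 ltnS in HN'.
have mn0 : 0 < m + n by rewrite addn_gt0 m0.
case: (posnP r) => [r0|r0].
  have N0 : N = 0 by move: hNr; rewrite r0 muln0 leqn0 => /eqP.
  subst N; have [b [f _]] := HN (fun _ _ => true).
  by case: (f (Ordinal mn0)).
have [b [f [fm fe]]] := HN (fun i j => bl (i %/ r) (j %/ r)).
have lt5 : forall u, f u %/ r < 5.
  move=> u; rewrite ltn_divLR //. exact: (leq_trans (ltn_ord _) hNr).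
have rm : r <= m.-1 by rewrite /r -!subn1 leq_sub2r // geq_minl.
have rn : r <= n.-1 by rewrite /r -!subn1 leq_sub2r // geq_minr.
have hm1 : m.-1 < m + n by apply: leq_ltn_trans (leq_pred m) _; rewrite -{1}(addn0 m) ltn_add2l.
have hm : m < m + n by rewrite -{1}(addn0 m) ltn_add2l.
have hl : (m + n).-1 < m + n by rewrite prednK.
pose o0 := Ordinal mn0; pose om1 := Ordinal hm1; pose om := Ordinal hm; pose ol := Ordinal hl.
have AB : f o0 %/ r < f om1 %/ r.
  apply: div_step => //; apply: leq_trans (@mono_gap _ _ f fm m.-1 o0 om1 _) => //.
  by rewrite leq_add2l.
have BC : f om1 %/ r <= f om %/ r.
  apply: leq_div2r; apply: ltnW; apply: fm => /=; by rewrite prednK.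
have CD : f om %/ r < f ol %/ r.
  apply: div_step => //; apply: leq_trans (@mono_gap _ _ f fm n.-1 om ol _).
    by rewrite leq_add2l.
  by rewrite /= -subn1 -subn1 addnBA.
have ead : bl (f o0 %/ r) (f ol %/ r) = b.
  apply: fe; first by rewrite /= -ltnS prednK //; exact: (leq_add m0 n0).
  by apply: e1.
have ebc : bl (f om1 %/ r) (f om %/ r) = b.
  apply: fe; first by rewrite /= prednK.
  by apply: e2.
case: b fe ead ebc => fe ead ebc.
  have /andP [P0 P1] := blue_fin _ _ _ _ AB BC CD (lt5 ol) ead.
  pose P := [pred u | f u %/ r \in [:: 0; 4]].
  have cl : closed e P.
    move=> x y exy; rewrite !inE.
    case: (ltngtP x y) => hxy.
    - by apply: bl_cl; rewrite ?lt5 // fe.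
    - by symmetry; apply: bl_cl; rewrite ?lt5 // fe // esym.
    - by have := eirr x; rewrite (_ : y = x) ?exy //; apply: val_inj.
  have := closed_connect cl (st o0 om1 _ _).
  rewrite !inE /= in P0 P1 *.
  by rewrite P0 eqxx orbT => /(_ isT isT) h; rewrite -h in P1.
exfalso; exact: red_fin _ _ _ _ AB BC CD (lt5 ol) ead ebc.
Qed.
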